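(* Let $\pi$ be a projective plane of order $q$ and let $n>1$ be a natural number. Then any embedding $\phi$ of the complete bipartite graph $K_{s,t}$ into $\pi$, where $s\ge q-n$ and $t>n^2+n+1$, maps the vertex class of size $t$ to a set of points lying on a single line.
   Context: A finite projective plane of order $q$ has $q^2+q+1$ points and lines, $q+1$ points on each line and $q+1$ lines through each point; any two distinct points lie on a unique line and any two lines meet in a unique point. An embedding of a simple graph $G=(V,E)$ into $\pi$ is an injective map $\phi$ from $V$ to the points of $\pi$ such that the induced map sending an edge $ab$ to the line through $\phi(a),\phi(b)$ is injective on $E$. *)

(* Defs.v *)
From mathcomp Require Import all_boot.
Set Implicit Arguments. Unset Strict Implicit. Unset Printing Implicit Defensive.

Definition proj_plane (q : nat) (P L : finType) (inc : P -> L -> bool) : Prop :=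
  [/\ #|P| = q ^ 2 + q + 1 /\ #|L| = q ^ 2 + q + 1,
      (forall l : L, #|[set x | inc x l]| = q + 1),
      (forall x : P, #|[set l | inc x l]| = q + 1),
      (forall x y : P, x != y -> exists! l : L, inc x l && inc y l) &
      (forall l m : L, l != m -> exists! x : P, inc x l && inc x m)].

Definition line_through (P L : finType) (inc : P -> L -> bool) (a b : P) (l : L) :=
  inc a l && inc b l.

(* Embedding of a simple graph (V, e) into the plane: phi is injective on
   vertices, and the induced map sending the edge ab to the line through
   phi a, phi b is injective on edges: if edges ab and cd are sent to the
   same line l, then {a,b} = {c,d}. *)
Definition graph_embedding (V P L : finType) (e : rel V)
    (inc : P -> L -> bool) (phi : V -> P) : Prop :=
  injective phi /\
  (forall (a b c d : V) (l : L), e a b -> e c d ->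
     line_through inc (phi a) (phi b) l -> line_through inc (phi c) (phi d) l ->
     ((a == c) && (b == d)) || ((a == d) && (b == c))).

Definition Kst_rel (s t : nat) : rel ('I_s + 'I_t)%type :=
  fun u v => match u, v with
             | inl _, inr _ => true
             | inr _, inl _ => true
             | _, _ => false
             end.

(* Main.v *)
Require Import Defs.
From mathcomp Require Import all_boot.
From mathcomp Require Import zify.

Lemma card_bigcup_le (I T : finType) (S : {set I}) (F : I -> {set T}) :
  #|\bigcup_(i in S) F i| <= \sum_(i in S) #|F i|.
Proof.
apply: (big_ind2 (fun (A : {set T}) k => #|A| <= k)) => //.
- by rewrite cards0.
- move=> A1 k1 A2 k2 h1 h2; apply: leq_trans (leq_card_setU _ _) _.
  exact: leq_add.
Qed.

Theorem corollary4p5 (q n s t : nat) (P L : finType) (inc : P -> L -> bool)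
    (phi : ('I_s + 'I_t)%type -> P) :
  proj_plane q inc ->
  1 < n ->
  q - n <= s ->
  n ^ 2 + n + 1 < t ->
  graph_embedding (@Kst_rel s t) inc phi ->
  exists l : L, forall j : 'I_t, inc (phi (inr j)) l.
Proof.
move=> [[cP cL] cl cx two_pts two_lines] n1 hs ht [inj emb].
pose a i := phi (inl i). pose b j := phi (inr j).
have t0 : 0 < t by lia.
pose j0 : 'I_t := Ordinal t0.
have [l0 _] : exists l0 : L, inc (b j0) l0.
  have : 0 < #|[set l | inc (b j0) l]| by rewrite (cx (b j0)) addn1.
  case/card_gt0P => l; rewrite inE => hl; by exists l.
pose lnf x y := odflt l0 [pick l | inc x l && inc y l].
have lnP x y : x != y -> inc x (lnf x y) && inc y (lnf x y).
  move=> xy; rewrite /lnf; case: pickP => //= H.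
  by have [l [Hl _]] := two_pts x y xy; rewrite H in Hl.
have uniq x y l m : x != y -> inc x l -> inc y l -> inc x m -> inc y m -> l = m.
  move=> xy xl yl xm ym; have [l' [_ U]] := two_pts x y xy.
  by rewrite -(U l) ?xl ?yl // -(U m) ?xm ?ym.
have E1 i j j' l : inc (a i) l -> inc (b j) l -> inc (b j') l -> j = j'.
  move=> h1 h2 h3.
  have := emb (inl i) (inr j) (inl i) (inr j') l erefl erefl.
  rewrite /line_through h1 h2 h3 => /(_ erefl erefl).
  by rewrite !eqxx /= orbF => /eqP [].
have E2 i i' j l : inc (a i) l -> inc (a i') l -> inc (b j) l -> i = i'.
  move=> h1 h2 h3.
  have := emb (inl i) (inr j) (inl i') (inr j) l erefl erefl.
  rewrite /line_through h1 h2 h3 => /(_ erefl erefl).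
  by rewrite !eqxx /= andbT orbF => /eqP [].
have abne i j : a i != b j by apply/eqP => /inj.
have bbne j j' : j != j' -> b j != b j'.
  by move=> ne; apply/eqP => /inj [] /eqP; rewrite (negbTE ne).
pose S j := [set l | inc (b j) l & [exists j', (j' != j) && inc (b j') l]].
have step1 j : #|S j| <= n.+1.
  pose F := [set lnf (a i) (b j) | i : 'I_s].
  have cF : #|F| = s.
    rewrite card_imset ?card_ord // => i i' e.
    have /andP [h1 h2] := lnP _ _ (abne i j).
    have /andP [h3 h4] := lnP _ _ (abne i' j).
    by apply: (E2 i i' j (lnf (a i) (b j))) => //; rewrite e.
  have dis : F :&: S j = set0.
    apply/setP => l; rewrite !inE; apply/negP => /andP [/imsetP [i _ ->]].
    case/andP => _ /existsP [j' /andP [ne h]].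
    have /andP [h1 h2] := lnP _ _ (abne i j).
    by move: ne; rewrite (E1 i j j' _ h1 h2 h) eqxx.
  have sub : F :|: S j \subset [set l | inc (b j) l].
    apply/subsetP => l; rewrite !inE => /orP [/imsetP [i _ ->]|/andP [-> _]] //.
    by case/andP: (lnP _ _ (abne i j)).
  have := subset_leq_card sub; rewrite cx cardsU dis cards0 cF subn0.
  lia.
have step2 l c : ~~ inc (b c) l -> #|[set j | inc (b j) l]| <= n.+1.
  move=> nc; apply: leq_trans (step1 c).
  have ne j : inc (b j) l -> b c != b j.
    by move=> h; apply/eqP => e; rewrite e h in nc.
  rewrite -(card_in_imset (f := fun j => lnf (b c) (b j))).
    apply: subset_leq_card; apply/subsetP => m /imsetP [j]; rewrite inE => h ->.
    have /andP [h1 h2] := lnP _ _ (ne j h).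
    rewrite inE h1; apply/existsP; exists j; rewrite h2 andbT.
    by apply/eqP => e; rewrite -e h in nc.
  move=> j j'; rewrite !inE => hj hj' e.
  apply/eqP; apply/negPn/negP => nj.
  have /andP [h1 h2] := lnP _ _ (ne j hj).
  have /andP [h3 h4] := lnP _ _ (ne j' hj').
  rewrite -e in h3 h4.
  have el := uniq _ _ _ _ (bbne _ _ nj) h2 h4 hj hj'.
  by rewrite el in h1; rewrite h1 in nc.
case: (boolP [exists l, [forall j, inc (b j) l]]).
  by case/existsP => l /forallP H; exists l.
move/existsPn => H; exfalso.
have bound m : m \in S j0 -> #|[set j | inc (b j) m] :\ j0| <= n.
  rewrite inE => /andP [h _].
  have [c Hc] : exists c, ~~ inc (b c) m by have /forallPn := H m.
  have := step2 m c Hc; rewrite (cardsD1 j0) inE h /=; lia.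
have cov : [set~ j0] \subset \bigcup_(m in S j0) ([set j | inc (b j) m] :\ j0).
  apply/subsetP => j; rewrite !inE => nj.
  have ne : b j0 != b j by apply: bbne; rewrite eq_sym.
  have /andP [h1 h2] := lnP _ _ ne.
  apply/bigcupP; exists (lnf (b j0) (b j)).
    by rewrite inE h1; apply/existsP; exists j; rewrite nj h2.
  by rewrite !inE nj h2.
have := subset_leq_card cov; rewrite cardsC1 card_ord => h.
have h2 := leq_trans h (card_bigcup_le _ _ _ _).
have h5 : \sum_(i in S j0) #|[set j | inc (b j) i] :\ j0| <= \sum_(i in S j0) n by apply: leq_sum.
have h4 := leq_trans h2 h5.
rewrite sum_nat_const in h4.
have h3 : #|S j0| * n <= n.+1 * n by apply: leq_mul (step1 j0) _.
move: ht; rewrite expnS expn1 => ht.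
lia.
Qed.
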